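(* Let $\kappa$ be an admissible kernel induced by $\mathbf a:\mathbb R^D\to\mathcal H$, and let $\mathcal S=\{\theta^\star_\ell\}_{\ell=1}^{m}\subset\mathbb R^D$ (pairwise distinct) be admissible with respect to $\kappa$. Then (i) the atoms $\mathbf a(\theta^\star_1),\dots,\mathbf a(\theta^\star_m)$ are linearly independent; (ii) with $\mathbf G\in\mathbb R^{m\times m}$, $\mathbf G[\ell,\ell']=\kappa(\theta^\star_\ell,\theta^\star_{\ell'})$, and $\mathbf g_\theta\in\mathbb R^m$, $\mathbf g_\theta[\ell]=\kappa(\theta,\theta^\star_\ell)$, one has $\|\mathbf G^{-1}\mathbf g_\theta\|_1<1$ for every $\theta\in\mathbb R^D\setminus\mathcal S$.
   Context: Kernel: $\kappa(\theta,\theta')=\langle\mathbf a(\theta),\mathbf a(\theta')\rangle$ on a real Hilbert space $\mathcal H$. The kernel is admissible if: (i) $\kappa(\theta,\theta)=1$ for all $\theta$; $\lim_{\theta'\to\theta}\kappa(\theta,\theta')=1$ for all $\theta$; for every $\varepsilon>0$ and $\theta$ there is a compact $K$ with $\sup_{\theta'\notin K}\kappa(\theta',\theta)<\varepsilon$; (ii) $0\le\kappa(\theta,\theta')<1$ whenever $\theta\ne\theta'$. A support $\{\theta^\star_\ell\}_{\ell=1}^k$ is admissible with respect to $\kappa$ if for every nonempty $T\subseteq\{1,\dots,k\}$ and every positive reals $\{c_\ell\}_{\ell\in T}$ with $\sum_{\ell\in T}c_\ell<1$, setting $\psi(\theta)=\sum_{\ell\in T}c_\ell\kappa(\theta,\theta^\star_\ell)$: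 (i) the set of global maximizers of $\psi$ over $\mathbb R^D$ is contained in $\{\theta^\star_\ell\}_{\ell\in T}$; (ii) if $\ell\in\{1,\dots,k\}\setminus T$ satisfies $\psi(\theta)-\kappa(\theta,\theta^\star_\ell)\le 0$ for all $\theta\in\{\theta^\star_{\ell'}\}_{\ell'\in T}$, then $\psi(\theta)-\kappa(\theta,\theta^\star_\ell)\le0$ for all $\theta\in\mathbb R^D$. *)

(* Defs.v *)
From Stdlib Require Import Reals Lra.
From Stdlib Require Fin.
Open Scope R_scope.

Fixpoint fsum {A : Type} (z : A) (add : A -> A -> A) (n : nat) : (Fin.t n -> A) -> A :=
  match n return (Fin.t n -> A) -> A with
  | O => fun _ => z
  | S k => fun f => add (f Fin.F1) (fsum z add k (fun i => f (Fin.FS i)))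
  end.

Definition rsum (n : nat) (f : Fin.t n -> R) : R := fsum 0 Rplus n f.

Definition RD (D : nat) := Fin.t D -> R.
Definition dist {D : nat} (x y : RD D) : R := sqrt (rsum D (fun i => (x i - y i) ^ 2)).
Definition enorm {D : nat} (x : RD D) : R := sqrt (rsum D (fun i => (x i) ^ 2)).

Definition is_open {D : nat} (U : RD D -> Prop) : Prop :=
  forall x, U x -> exists r, 0 < r /\ forall y, dist x y < r -> U y.
Definition is_closed {D : nat} (K : RD D -> Prop) : Prop := is_open (fun x => ~ K x).
Definition is_bounded {D : nat} (K : RD D -> Prop) : Prop :=
  exists r, forall x, K x -> enorm x <= r.
(* Heine-Borel: compact subsets of R^D are exactly the closed bounded ones. *)
Definition is_compact {D : nat} (K : RD D -> Prop) : Prop := is_closed K /\ is_bounded K.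

Record HilbertSpace := {
  hcar :> Type;
  hzero : hcar;
  hadd : hcar -> hcar -> hcar;
  hscal : R -> hcar -> hcar;
  inner : hcar -> hcar -> R;
  hadd_assoc : forall x y z, hadd x (hadd y z) = hadd (hadd x y) z;
  hadd_comm : forall x y, hadd x y = hadd y x;
  hadd_zero : forall x, hadd x hzero = x;
  hadd_opp : forall x, hadd x (hscal (-1) x) = hzero;
  hscal_one : forall x, hscal 1 x = x;
  hscal_assoc : forall a b x, hscal a (hscal b x) = hscal (a * b) x;
  hscal_distr_l : forall a x y, hscal a (hadd x y) = hadd (hscal a x) (hscal a y);
  hscal_distr_r : forall a b x, hscal (a + b) x = hadd (hscal a x) (hscal b x);
  inner_sym : forall x y, inner x y = inner y x;
  inner_lin : forall a x y z, inner (hadd (hscal a x) y) z = a * inner x z + inner y z;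
  inner_pos : forall x, 0 <= inner x x;
  inner_def : forall x, inner x x = 0 -> x = hzero;
  hcomplete : forall u : nat -> hcar,
    (forall eps, 0 < eps -> exists N, forall p q, (N <= p)%nat -> (N <= q)%nat ->
        sqrt (inner (hadd (u p) (hscal (-1) (u q))) (hadd (u p) (hscal (-1) (u q)))) < eps) ->
    exists l, forall eps, 0 < eps -> exists N, forall p, (N <= p)%nat ->
        sqrt (inner (hadd (u p) (hscal (-1) l)) (hadd (u p) (hscal (-1) l))) < eps
}.

Definition kappa {D : nat} (H : HilbertSpace) (a : RD D -> H) (t t' : RD D) : R :=
  inner H (a t) (a t').

Definition admissible_kernel {D : nat} (H : HilbertSpace) (a : RD D -> H) : Prop :=
  let k := kappa H a in
  (forall t, k t t = 1) /\
  (forall t eps, 0 < eps -> exists delta, 0 < delta /\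
      forall t', dist t t' < delta -> Rabs (k t t' - 1) < eps) /\
  (forall eps t, 0 < eps -> exists K : RD D -> Prop, is_compact K /\
      exists b, b < eps /\ forall t', ~ K t' -> k t' t <= b) /\
  (forall t t', t <> t' -> 0 <= k t t' /\ k t t' < 1).

Definition psi {D m : nat} (k : RD D -> RD D -> R) (ts : Fin.t m -> RD D)
  (T : Fin.t m -> bool) (c : Fin.t m -> R) (t : RD D) : R :=
  rsum m (fun l => if T l then c l * k t (ts l) else 0).

Definition admissible_support {D m : nat} (k : RD D -> RD D -> R) (ts : Fin.t m -> RD D) : Prop :=
  forall (T : Fin.t m -> bool) (c : Fin.t m -> R),
    (exists l, T l = true) ->
    (forall l, T l = true -> 0 < c l) ->
    rsum m (fun l => if T l then c l else 0) < 1 ->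
    (forall t, (forall t', psi k ts T c t' <= psi k ts T c t) ->
        exists l, T l = true /\ t = ts l) /\
    (forall l, T l = false ->
        (forall l', T l' = true -> psi k ts T c (ts l') - k (ts l') (ts l) <= 0) ->
        forall t, psi k ts T c t - k t (ts l) <= 0).

Definition lin_indep {m : nat} (H : HilbertSpace) (v : Fin.t m -> H) : Prop :=
  forall c : Fin.t m -> R,
    fsum (hzero H) (hadd H) m (fun l => hscal H (c l) (v l)) = hzero H ->
    forall l, c l = 0.

Definition delta {m : nat} (i j : Fin.t m) : R := if Fin.eq_dec i j then 1 else 0.
Definition is_inverse {m : nat} (G Gi : Fin.t m -> Fin.t m -> R) : Prop :=
  (forall i j, rsum m (fun k => Gi i k * G k j) = delta i j) /\
  (forall i j, rsum m (fun k => G i k * Gi k j) = delta i j).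
Definition matvec {m : nat} (M : Fin.t m -> Fin.t m -> R) (v : Fin.t m -> R) : Fin.t m -> R :=
  fun i => rsum m (fun k => M i k * v k).
Definition l1norm {m : nat} (v : Fin.t m -> R) : R := rsum m (fun i => Rabs (v i)).

(* Main.v *)
From Stdlib Require Import Reals Lra Lia List.
From Stdlib Require Rtopology.
From Stdlib Require Fin.
From Stdlib Require Import ClassicalEpsilon Classical.
Require Import Defs.
Open Scope R_scope.


Lemma rsum_S n (f : Fin.t (S n) -> R) : rsum (S n) f = f Fin.F1 + rsum n (fun i => f (Fin.FS i)).
Proof. reflexivity. Qed.
Lemma rsum_O (f : Fin.t 0 -> R) : rsum 0 f = 0.
Proof. reflexivity. Qed.

Lemma rsum_ext n (f g : Fin.t n -> R) : (forall i, f i = g i) -> rsum n f = rsum n g.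
Proof.
  induction n; intros E; [reflexivity|]. rewrite !rsum_S, E, (IHn _ (fun i => g (Fin.FS i))); auto.
Qed.

Lemma rsum_plus n (f g : Fin.t n -> R) : rsum n (fun i => f i + g i) = rsum n f + rsum n g.
Proof.
  induction n; [rewrite !rsum_O; lra|]. rewrite !rsum_S, (IHn (fun i => f (Fin.FS i)) (fun i => g (Fin.FS i))). lra.
Qed.

Lemma rsum_scal n c (f : Fin.t n -> R) : rsum n (fun i => c * f i) = c * rsum n f.
Proof.
  induction n; [rewrite !rsum_O; lra|]. rewrite !rsum_S, (IHn (fun i => f (Fin.FS i))). lra.
Qed.

Lemma rsum_zero n : rsum n (fun _ => 0) = 0.
Proof. induction n; [reflexivity|]. rewrite rsum_S, IHn; lra. Qed.

Lemma rsum_minus n (f g : Fin.t n -> R) : rsum n (fun i => f i - g i) = rsum n f - rsum n g.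
Proof.
  induction n; [rewrite !rsum_O; lra|]. rewrite !rsum_S, (IHn (fun i => f (Fin.FS i)) (fun i => g (Fin.FS i))). lra.
Qed.

Lemma rsum_le n (f g : Fin.t n -> R) : (forall i, f i <= g i) -> rsum n f <= rsum n g.
Proof.
  induction n; intros E; [rewrite !rsum_O; lra|]. rewrite !rsum_S.
  specialize (IHn (fun i => f (Fin.FS i)) (fun i => g (Fin.FS i)) (fun i => E (Fin.FS i))).
  specialize (E Fin.F1). lra.
Qed.

Lemma rsum_nonneg n (f : Fin.t n -> R) : (forall i, 0 <= f i) -> 0 <= rsum n f.
Proof. intros E. rewrite <- (rsum_zero n). apply rsum_le; auto. Qed.

Lemma rsum_abs n (f : Fin.t n -> R) : Rabs (rsum n f) <= rsum n (fun i => Rabs (f i)).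
Proof.
  induction n; [rewrite !rsum_O, Rabs_R0; lra|]. rewrite !rsum_S.
  eapply Rle_trans; [apply Rabs_triang|]. specialize (IHn (fun i => f (Fin.FS i))). lra.
Qed.

Lemma rsum_single_le n (f : Fin.t n -> R) i : (forall j, 0 <= f j) -> f i <= rsum n f.
Proof.
  induction n; intros P; [inversion i|]. rewrite rsum_S.
  pattern i; apply Fin.caseS'.
  - pose proof (rsum_nonneg n (fun j => f (Fin.FS j)) (fun j => P _)). lra.
  - intro j. pose proof (IHn (fun j => f (Fin.FS j)) j (fun j => P _)). specialize (P Fin.F1). lra.
Qed.

Lemma rsum_const_le n (f : Fin.t n -> R) b : (forall j, f j <= b) -> rsum n f <= INR n * b.
Proof.
  induction n; intros P; [rewrite rsum_O; simpl; lra|]. rewrite rsum_S, S_INR.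
  pose proof (IHn (fun j => f (Fin.FS j)) (fun j => P _)). specialize (P Fin.F1). lra.
Qed.

Lemma rsum_exchange n p (f : Fin.t n -> Fin.t p -> R) :
  rsum n (fun i => rsum p (fun j => f i j)) = rsum p (fun j => rsum n (fun i => f i j)).
Proof.
  induction n.
  - rewrite rsum_O. symmetry. apply (rsum_zero p).
  - rewrite rsum_S, IHn, <- rsum_plus. apply rsum_ext. intros j. rewrite rsum_S. reflexivity.
Qed.

Lemma delta_refl n (i : Fin.t n) : delta i i = 1.
Proof. unfold delta; destruct (Fin.eq_dec i i); congruence. Qed.
Lemma delta_neq n (i j : Fin.t n) : i <> j -> delta i j = 0.
Proof. unfold delta; destruct (Fin.eq_dec i j); congruence. Qed.
Lemma delta_sym n (i j : Fin.t n) : delta i j = delta j i.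
Proof. unfold delta; destruct (Fin.eq_dec i j), (Fin.eq_dec j i); congruence. Qed.

Lemma rsum_delta n (i : Fin.t n) (f : Fin.t n -> R) : rsum n (fun k => delta i k * f k) = f i.
Proof.
  induction n; [inversion i|]. rewrite rsum_S. revert f. pattern i; apply Fin.caseS'.
  - intros f. rewrite delta_refl. rewrite (rsum_ext _ _ (fun _ => 0)); [rewrite rsum_zero; lra|].
    intros k. rewrite delta_neq; [lra|]. intro E; inversion E.
  - intros p f. rewrite delta_neq by (intro E; inversion E).
    rewrite (rsum_ext _ _ (fun k => delta p k * f (Fin.FS k))); [rewrite IHn; lra|].
    intros k. unfold delta. destruct (Fin.eq_dec (Fin.FS p) (Fin.FS k)), (Fin.eq_dec p k); try reflexivity.
    + apply Fin.FS_inj in e; congruence.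
    + subst; congruence.
Qed.

Lemma rsum_lt_exists n (f g : Fin.t n -> R) : (forall i, f i <= g i) -> (exists i, f i < g i) -> rsum n f < rsum n g.
Proof.
  induction n; intros E [i Hi]; [inversion i|]. rewrite !rsum_S.
  revert Hi. pattern i; apply Fin.caseS'.
  - intros Hi. pose proof (rsum_le n (fun i => f (Fin.FS i)) (fun i => g (Fin.FS i)) (fun i => E (Fin.FS i))). lra.
  - intros j Hj. pose proof (IHn (fun i => f (Fin.FS i)) (fun i => g (Fin.FS i)) (fun i => E (Fin.FS i)) (ex_intro _ j Hj)).
    specialize (E Fin.F1). lra.
Qed.

Lemma fin_bound_R n (P : Fin.t n -> R -> Prop) :
  (forall j r r', r <= r' -> P j r -> P j r') -> (forall j, exists r, P j r) -> exists r, forall j, P j r.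
Proof.
  induction n; intros M E.
  - exists 0. intros j; inversion j.
  - assert (Hs : exists r, forall j, P (Fin.FS j) r) by (apply (IHn (fun j => P (Fin.FS j))); [intros j r r' h1 h2; eapply M; eauto | intros j; apply E]).
    destruct Hs as [r1 H1].
    destruct (E Fin.F1) as [r0 H0]. exists (Rmax r0 r1). intros j. pattern j; apply Fin.caseS'.
    + apply M with r0; auto. apply Rmax_l.
    + intros p. apply M with r1; auto. apply Rmax_r.
Qed.

Lemma fin_bound_nat n (P : Fin.t n -> nat -> Prop) :
  (forall j r r', (r <= r')%nat -> P j r -> P j r') -> (forall j, exists r, P j r) -> exists r, forall j, P j r.
Proof.
  induction n; intros M E.
  - exists 0%nat. intros j; inversion j.
  - assert (Hs : exists r, forall j, P (Fin.FS j) r) by (apply (IHn (fun j => P (Fin.FS j))); [intros j r r' h1 h2; eapply M; eauto | intros j; apply E]).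
    destruct Hs as [r1 H1].
    destruct (E Fin.F1) as [r0 H0]. exists (Nat.max r0 r1). intros j. pattern j; apply Fin.caseS'.
    + apply M with r0; auto. lia.
    + intros p. apply M with r1; auto. lia.
Qed.

Lemma choice_fun {A B : Type} (P : A -> B -> Prop) : (forall x, exists y, P x y) -> exists f, forall x, P x (f x).
Proof.
  intros H. exists (fun x => proj1_sig (constructive_indefinite_description _ (H x))).
  intros x. exact (proj2_sig (constructive_indefinite_description _ (H x))).
Qed.


Lemma inner_zero_l (H : HilbertSpace) z : inner H (hzero H) z = 0.
Proof.
  assert (E : hadd H (hscal H 1 (hzero H)) (hzero H) = hzero H) by (rewrite hadd_zero, hscal_one; reflexivity).
  pose proof (inner_lin H 1 (hzero H) (hzero H) z) as L. rewrite E in L. lra.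
Qed.
Lemma inner_scal_l (H : HilbertSpace) c x z : inner H (hscal H c x) z = c * inner H x z.
Proof.
  pose proof (inner_lin H c x (hzero H) z) as L. rewrite hadd_zero, inner_zero_l in L. lra.
Qed.
Lemma inner_add_l (H : HilbertSpace) x y z : inner H (hadd H x y) z = inner H x z + inner H y z.
Proof.
  pose proof (inner_lin H 1 x y z) as L. rewrite hscal_one in L. lra.
Qed.
Lemma inner_zero_r (H : HilbertSpace) z : inner H z (hzero H) = 0.
Proof. rewrite inner_sym; apply inner_zero_l. Qed.
Lemma inner_scal_r (H : HilbertSpace) c x z : inner H z (hscal H c x) = c * inner H z x.
Proof. rewrite inner_sym, inner_scal_l, inner_sym; reflexivity. Qed.
Lemma inner_add_r (H : HilbertSpace) x y z : inner H z (hadd H x y) = inner H z x + inner H z y.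
Proof. rewrite inner_sym, inner_add_l, (inner_sym H x), (inner_sym H y); reflexivity. Qed.

Definition hsub (H : HilbertSpace) (x y : H) : H := hadd H x (hscal H (-1) y).
Lemma inner_sub_l (H : HilbertSpace) x y z : inner H (hsub H x y) z = inner H x z - inner H y z.
Proof. unfold hsub. rewrite inner_add_l, inner_scal_l. lra. Qed.
Lemma inner_sub_r (H : HilbertSpace) x y z : inner H z (hsub H x y) = inner H z x - inner H z y.
Proof. rewrite inner_sym, inner_sub_l, (inner_sym H x), (inner_sym H y); reflexivity. Qed.

Lemma inner_fsum_l (H : HilbertSpace) n (f : Fin.t n -> H) z :
  inner H (fsum (hzero H) (hadd H) n f) z = rsum n (fun l => inner H (f l) z).
Proof.
  induction n.
  - simpl. rewrite inner_zero_l. reflexivity.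
  - simpl fsum. rewrite inner_add_l, IHn. rewrite rsum_S. reflexivity.
Qed.

Lemma CS_unit (H : HilbertSpace) d u : inner H u u = 1 -> (inner H d u) ^ 2 <= inner H d d.
Proof.
  intros Hu. set (l := - inner H d u).
  pose proof (inner_pos H (hadd H d (hscal H l u))) as P.
  rewrite inner_add_l, !inner_add_r, !inner_scal_l, !inner_scal_r, Hu, (inner_sym H u d) in P.
  unfold l in P. nra.
Qed.

Definition Vc {D m : nat} (H : HilbertSpace) (a : RD D -> H) (ts : Fin.t m -> RD D) (c : Fin.t m -> R) : H :=
  fsum (hzero H) (hadd H) m (fun l => hscal H (c l) (a (ts l))).

Lemma inner_V_l {D m} H a ts (c : Fin.t m -> R) z :
  inner H (@Vc D m H a ts c) z = rsum m (fun l => c l * inner H (a (ts l)) z).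
Proof. unfold Vc. rewrite inner_fsum_l. apply rsum_ext. intros; apply inner_scal_l. Qed.
Lemma inner_V_r {D m} H a ts (c : Fin.t m -> R) z :
  inner H z (@Vc D m H a ts c) = rsum m (fun l => c l * inner H z (a (ts l))).
Proof. rewrite inner_sym, inner_V_l. apply rsum_ext. intros; rewrite inner_sym; reflexivity. Qed.

Lemma k_bounds {D} (H : HilbertSpace) (a : RD D -> H) : admissible_kernel H a -> forall t t', 0 <= kappa H a t t' <= 1.
Proof.
  intros [K1 [_ [_ K4]]] t t'. destruct (classic (t = t')) as [E|E].
  - subst. rewrite K1. lra.
  - specialize (K4 t t' E). lra.
Qed.
Lemma k_sym {D} (H : HilbertSpace) (a : RD D -> H) t t' : kappa H a t t' = kappa H a t' t.
Proof. unfold kappa. apply inner_sym. Qed.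


Lemma arch_inv e : 0 < e -> exists N : nat, / (INR N + 1) < e.
Proof.
  intros He. destruct (archimed_cor1 e He) as [N [HN HN0]]. exists N.
  apply lt_INR in HN0. simpl in HN0.
  eapply Rle_lt_trans; [|exact HN]. apply Rinv_le_contravar; lra.
Qed.

Lemma inv_mono (n N : nat) : (N <= n)%nat -> / (INR n + 1) <= / (INR N + 1).
Proof.
  intros H. apply le_INR in H. pose proof (pos_INR N). apply Rinv_le_contravar; lra.
Qed.

Lemma coord_le {D} (x : RD D) i : Rabs (x i) <= enorm x.
Proof.
  unfold enorm. rewrite <- sqrt_Rsqr_abs. apply sqrt_le_1_alt.
  replace (Rsqr (x i)) with (x i ^ 2) by (unfold Rsqr; ring).
  apply (rsum_single_le D (fun j => x j ^ 2)). intros; apply pow2_ge_0.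
Qed.

Lemma dist_small {D} (x y : RD D) e : 0 < e -> (forall i, Rabs (x i - y i) < e / (INR D + 1)) -> dist x y < e.
Proof.
  intros He Hi. unfold dist.
  assert (HD := pos_INR D).
  set (e' := e / (INR D + 1)).
  assert (He' : 0 < e') by (unfold e'; apply Rdiv_lt_0_compat; lra).
  assert (S1 : rsum D (fun i => (x i - y i) ^ 2) <= INR D * e' ^ 2).
  { apply rsum_const_le. intros j. specialize (Hi j). fold e' in Hi.
    apply Rabs_def2 in Hi. nra. }
  assert (S2 : INR D * e' ^ 2 < e ^ 2).
  { unfold e'. unfold Rdiv. rewrite Rpow_mult_distr.
    assert (0 < / (INR D + 1)) by (apply Rinv_0_lt_compat; lra).
    assert (/ (INR D + 1) * (INR D + 1) = 1) by (field; lra).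
    assert (INR D * / (INR D + 1) < 1).
    { replace (INR D * / (INR D + 1)) with (1 - /(INR D+1)) by (field; lra). lra. }
    assert (/ (INR D + 1) <= 1) by (rewrite <- Rinv_1; apply Rinv_le_contravar; lra).
    set (q := / (INR D + 1)) in *.
    assert (INR D * q * q < 1) by nra.
    assert (0 < e ^ 2) by (apply pow_lt; lra).
    replace (INR D * (e ^ 2 * q ^ 2)) with ((INR D * q * q) * e ^ 2) by ring. nra. }
  rewrite <- (sqrt_pow2 e) by lra. apply sqrt_lt_1_alt. split; [|lra].
  apply rsum_nonneg. intros; apply pow2_ge_0.
Qed.

Definition cv (u : nat -> R) (l : R) : Prop :=
  forall e, 0 < e -> exists N, forall n, (N <= n)%nat -> Rabs (u n - l) < e.

Definition incr (phi : nat -> nat) : Prop := forall n, (phi n < phi (S n))%nat.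

Lemma incr_ge phi : incr phi -> forall n, (n <= phi n)%nat.
Proof. intros H n; induction n; [lia|]. specialize (H n). lia. Qed.

Lemma incr_comp phi psi : incr phi -> incr psi -> incr (fun n => phi (psi n)).
Proof.
  intros H1 H2 n. assert (forall a b, (a < b)%nat -> (phi a < phi b)%nat).
  { intros a b Hab. induction Hab; [apply H1|]. specialize (H1 m). lia. }
  apply H, H2.
Qed.

Lemma cv_sub u l psi : cv u l -> incr psi -> cv (fun n => u (psi n)) l.
Proof.
  intros C I e He. destruct (C e He) as [N HN]. exists N. intros n Hn. apply HN.
  pose proof (incr_ge psi I n). lia.
Qed.

Fixpoint build_seq (G : nat * nat -> nat) (n : nat) : nat :=
  match n with
  | O => G (O, O)
  | S n' => G (S (build_seq G n'), S n')
  end.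

Lemma BW1 (u : nat -> R) r : (forall n, Rabs (u n) <= r) ->
  exists phi, incr phi /\ exists l, cv (fun n => u (phi n)) l.
Proof.
  intros Hb.
  destruct (Rtopology.Bolzano_Weierstrass u (fun c => -r <= c <= r) (Rtopology.compact_P3 (-r) r)) as [l Hl].
  { intros n. specialize (Hb n). unfold Rabs in Hb; destruct (Rcase_abs (u n)); lra. }
  assert (G : forall Nk : nat * nat, exists p, (fst Nk <= p)%nat /\ Rabs (u p - l) < / (INR (snd Nk) + 1)).
  { intros [N k]. simpl.
    assert (Hp : 0 < / (INR k + 1)) by (apply Rinv_0_lt_compat; pose proof (pos_INR k); lra).
    destruct (Hl (Rtopology.disc l (mkposreal _ Hp)) N) as [p [Hp1 Hp2]].
    - exists (mkposreal _ Hp). intros x Hx; exact Hx.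
    - exists p. split; auto. }
  apply choice_fun in G. destruct G as [g Hg].
  exists (build_seq g). split.
  - intros n. simpl. destruct (Hg (S (build_seq g n), S n)) as [H1 _]. simpl in H1. lia.
  - exists l. intros e He. destruct (arch_inv e He) as [N HN]. exists N. intros n Hn.
    assert (Hn' : Rabs (u (build_seq g n) - l) < / (INR n + 1)).
    { destruct n; simpl.
      - exact (proj2 (Hg (O, O))).
      - exact (proj2 (Hg (S (build_seq g n), S n))). }
    pose proof (inv_mono n N Hn). lra.
Qed.

Fixpoint all_fins (n : nat) : list (Fin.t n) :=
  match n with
  | O => nil
  | S k => Fin.F1 :: map Fin.FS (all_fins k)
  end.

Lemma all_fins_In n (i : Fin.t n) : In i (all_fins n).
Proof.
  induction n; [inversion i|]. pattern i; apply Fin.caseS'.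
  - left; reflexivity.
  - intros p. right. apply in_map. apply IHn.
Qed.

Lemma BWL {D} (v : nat -> RD D) r : (forall n, enorm (v n) <= r) ->
  forall L : list (Fin.t D), exists phi, incr phi /\ forall i, In i L -> exists l, cv (fun n => v (phi n) i) l.
Proof.
  intros Hb L. induction L as [|i L IH].
  - exists (fun n => n). split; [intros n; lia|]. intros i [].
  - destruct IH as [phi [Iphi Hphi]].
    destruct (BW1 (fun n => v (phi n) i) r) as [psi [Ipsi [l Hl]]].
    { intros n. eapply Rle_trans; [apply coord_le|apply Hb]. }
    exists (fun n => phi (psi n)). split; [apply incr_comp; auto|].
    intros j [E|Hj].
    + subst. exists l. exact Hl.
    + destruct (Hphi j Hj) as [l' Hl']. exists l'. apply (cv_sub (fun n => v (phi n) j)); auto.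
Qed.

Lemma BWD {D} (v : nat -> RD D) r : (forall n, enorm (v n) <= r) ->
  exists phi, incr phi /\ exists y, forall e, 0 < e -> exists N, forall n, (N <= n)%nat -> dist y (v (phi n)) < e.
Proof.
  intros Hb. destruct (BWL v r Hb (all_fins D)) as [phi [Iphi Hphi]].
  assert (Hy : forall i, exists l, cv (fun n => v (phi n) i) l) by (intros i; apply Hphi, all_fins_In).
  apply choice_fun in Hy. destruct Hy as [y Hy].
  exists phi. split; auto. exists y. intros e He.
  assert (He' : 0 < e / (INR D + 1)) by (apply Rdiv_lt_0_compat; pose proof (pos_INR D); lra).
  destruct (fin_bound_nat D (fun i N => forall n, (N <= n)%nat -> Rabs (v (phi n) i - y i) < e / (INR D + 1))) as [N HN].
  - intros j r1 r2 H12 H n Hn. apply H. lia.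
  - intros j. apply (Hy j _ He').
  - exists N. intros n Hn. apply dist_small; auto. intros i. rewrite Rabs_minus_sym. apply HN; auto.
Qed.

Lemma max_exists {D} (f : RD D -> R) :
  (forall t e, 0 < e -> exists d, 0 < d /\ forall t', dist t t' < d -> Rabs (f t' - f t) < e) ->
  (exists Mb, forall t, f t <= Mb) ->
  (exists t0 r b, b < f t0 /\ forall t, r < enorm t -> f t <= b) ->
  exists y, forall t, f t <= f y.
Proof.
  intros Hc [Mb HMb] [t0 [r [b [Hb0 Hdec]]]].
  destruct (completeness (fun v => exists t, v = f t)) as [M [HM1 HM2]].
  { exists Mb. intros v [t ->]. apply HMb. }
  { exists (f t0). exists t0; reflexivity. }
  assert (Hle : forall t, f t <= M) by (intros t; apply HM1; exists t; reflexivity).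
  assert (Hseq : forall n : nat, exists t, M - / (INR n + 1) < f t).
  { intros n. apply NNPP. intros Hn.
    assert (Hp : 0 < / (INR n + 1)) by (apply Rinv_0_lt_compat; pose proof (pos_INR n); lra).
    assert (M <= M - / (INR n + 1)); [|lra].
    apply HM2. intros v [t ->]. apply Rnot_lt_le. intros Hlt. apply Hn. exists t; exact Hlt. }
  apply choice_fun in Hseq. destruct Hseq as [u Hu].
  pose proof (Hle t0) as Ht0.
  destruct (arch_inv (M - b)) as [N0 HN0]; [lra|].
  set (v := fun n => u (n + N0)%nat).
  assert (Hv : forall n, M - / (INR n + 1) < f (v n)).
  { intros n. unfold v. pose proof (Hu (n + N0)%nat). pose proof (inv_mono (n + N0) n ltac:(lia)). lra. }
  assert (Hvb : forall n, enorm (v n) <= r).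
  { intros n. apply Rnot_lt_le. intros Hr. specialize (Hdec _ Hr).
    unfold v in Hdec. pose proof (Hu (n + N0)%nat). pose proof (inv_mono (n + N0) N0 ltac:(lia)). lra. }
  destruct (BWD v r Hvb) as [phi [Iphi [y Hy]]].
  exists y. intros t. eapply Rle_trans; [apply (Hle t)|].
  apply Rnot_lt_le. intros Hlt.
  set (e := M - f y).
  destruct (Hc y (e / 2)) as [d [Hd Hd2]]; [unfold e; lra|].
  destruct (Hy d Hd) as [N1 HN1].
  destruct (arch_inv (e / 2)) as [N2 HN2]; [unfold e; lra|].
  set (n := Nat.max N1 N2).
  specialize (HN1 n ltac:(unfold n; lia)). specialize (Hd2 _ HN1).
  pose proof (Hv (phi n)). pose proof (incr_ge phi Iphi n).
  pose proof (inv_mono (phi n) N2 ltac:(unfold n in *; lia)).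
  apply Rabs_def2 in Hd2. unfold e in *. lra.
Qed.


Lemma sq_lt_abs y e : 0 < e -> y ^ 2 < e ^ 2 -> Rabs y < e.
Proof. intros He H. unfold Rabs; destruct (Rcase_abs y); nra. Qed.

Lemma max_ker {D m} (H : HilbertSpace) (a : RD D -> H) (ts : Fin.t m -> RD D) (c : Fin.t m -> R) t0 :
  admissible_kernel H a ->
  0 < rsum m (fun j => c j * kappa H a t0 (ts j)) ->
  exists y, forall t, rsum m (fun j => c j * kappa H a t (ts j)) <= rsum m (fun j => c j * kappa H a y (ts j)).
Proof.
  intros Hk Hf0. pose proof (k_bounds H a Hk) as Kb.
  destruct Hk as [K1 [K2 [K3 K4]]].
  set (Sc := rsum m (fun j => Rabs (c j))).
  assert (HSc : 0 <= Sc) by (apply rsum_nonneg; intros; apply Rabs_pos).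
  apply max_exists.
  - intros t e He.
    set (eta := e / (Sc + 1)).
    assert (Heta : 0 < eta) by (unfold eta; apply Rdiv_lt_0_compat; lra).
    destruct (K2 t (eta ^ 2 / 2)) as [d [Hd Hd2]]; [apply Rdiv_lt_0_compat; [apply pow_lt|]; lra|].
    exists d. split; auto. intros t' Htt'. specialize (Hd2 t' Htt').
    assert (Hth : forall th, Rabs (kappa H a t' th - kappa H a t th) < eta).
    { intros th. apply sq_lt_abs; auto.
      pose proof (CS_unit H (hsub H (a t') (a t)) (a th) (K1 th)) as CS.
      rewrite !inner_sub_l, !inner_sub_r in CS. unfold kappa in *.
      rewrite (inner_sym H (a t) (a t')) in CS, Hd2. rewrite K1, K1 in CS.
      apply Rabs_def2 in Hd2. lra. }
    rewrite <- rsum_minus.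
    eapply Rle_lt_trans; [apply rsum_abs|].
    eapply Rle_lt_trans.
    + apply (rsum_le _ _ (fun j => Rabs (c j) * eta)). intros j.
      replace (c j * kappa H a t' (ts j) - c j * kappa H a t (ts j)) with (c j * (kappa H a t' (ts j) - kappa H a t (ts j))) by ring.
      rewrite Rabs_mult. apply Rmult_le_compat_l; [apply Rabs_pos|]. left; apply Hth.
    + rewrite (rsum_ext _ _ (fun j => eta * Rabs (c j))) by (intros; ring).
      rewrite rsum_scal. fold Sc. unfold eta.
      replace (e / (Sc + 1) * Sc) with (e - e / (Sc + 1)) by (field; lra).
      assert (0 < e / (Sc + 1)) by (apply Rdiv_lt_0_compat; lra). lra.
  - exists Sc. intros t. apply rsum_le. intros j.
    specialize (Kb t (ts j)). pose proof (Rle_abs (c j)). pose proof (Rabs_pos (c j)).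
    assert (c j * kappa H a t (ts j) <= Rabs (c j) * kappa H a t (ts j)) by (apply Rmult_le_compat_r; lra).
    nra.
  - set (f0 := rsum m (fun j => c j * kappa H a t0 (ts j))) in *.
    set (eps := f0 / (Sc + 1)).
    assert (Heps : 0 < eps) by (unfold eps; apply Rdiv_lt_0_compat; lra).
    destruct (fin_bound_R m (fun j r => forall t, r < enorm t -> kappa H a t (ts j) <= eps)) as [r Hr].
    + intros j r1 r2 H12 Hj t Ht. apply Hj. lra.
    + intros j. destruct (K3 eps (ts j) Heps) as [K [[_ [r Hr]] [b [Hb HK]]]].
      exists r. intros t Ht. assert (~ K t) by (intros Kt; specialize (Hr t Kt); lra).
      specialize (HK t H0). lra.
    + exists t0, r, (Sc * eps). split.
      * change (Sc * eps < f0). unfold eps. replace (Sc * (f0 / (Sc + 1))) with (f0 - f0 / (Sc + 1)) by (field; lra).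
        assert (0 < f0 / (Sc + 1)) by (apply Rdiv_lt_0_compat; lra). lra.
      * intros t Ht. cbv beta. rewrite (Rmult_comm Sc eps). unfold Sc. rewrite <- rsum_scal. apply rsum_le. intros j.
        specialize (Hr j t Ht). specialize (Kb t (ts j)). pose proof (Rle_abs (c j)). pose proof (Rabs_pos (c j)).
        assert (c j * kappa H a t (ts j) <= Rabs (c j) * kappa H a t (ts j)) by (apply Rmult_le_compat_r; lra).
        assert (Rabs (c j) * kappa H a t (ts j) <= Rabs (c j) * eps) by (apply Rmult_le_compat_l; lra).
        lra.
Qed.


Lemma rsum_scal_r n (f : Fin.t n -> R) c : rsum n (fun i => f i * c) = rsum n f * c.
Proof. rewrite (rsum_ext _ _ (fun i => c * f i)) by (intros; ring). rewrite rsum_scal; ring. Qed.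

Definition cnt n (U : Fin.t n -> bool) : nat := fsum 0%nat Nat.add n (fun l => if U l then 1%nat else 0%nat).
Definition remove {n} (U : Fin.t n -> bool) (l : Fin.t n) : Fin.t n -> bool :=
  fun j => if Fin.eq_dec j l then false else U j.

Lemma cnt_ext n (U U' : Fin.t n -> bool) : (forall i, U i = U' i) -> cnt n U = cnt n U'.
Proof.
  induction n; intros E; [reflexivity|]. unfold cnt; simpl. rewrite E.
  f_equal. apply (IHn (fun i => U (Fin.FS i)) (fun i => U' (Fin.FS i))). intros; apply E.
Qed.

Lemma cnt_S n (U : Fin.t (S n) -> bool) : cnt (S n) U = ((if U Fin.F1 then 1 else 0) + cnt n (fun i => U (Fin.FS i)))%nat.
Proof. reflexivity. Qed.

Lemma cnt_remove n (U : Fin.t n -> bool) l : U l = true -> S (cnt n (remove U l)) = cnt n U.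
Proof.
  induction n; [inversion l|]. revert U. pattern l; apply Fin.caseS'.
  - intros U Hl. unfold cnt; simpl. rewrite Hl. unfold remove at 1.
    destruct (Fin.eq_dec Fin.F1 Fin.F1); [|congruence]. simpl. apply f_equal.
    apply (cnt_ext n (fun i => remove U Fin.F1 (Fin.FS i)) (fun i => U (Fin.FS i))). intros i. unfold remove. destruct (Fin.eq_dec (Fin.FS i) Fin.F1) as [E|]; auto. inversion E.
  - intros p U Hl. rewrite !cnt_S.
    assert (E1 : remove U (Fin.FS p) Fin.F1 = U Fin.F1).
    { unfold remove. destruct (Fin.eq_dec Fin.F1 (Fin.FS p)) as [E|]; auto. inversion E. }
    rewrite E1.
    rewrite (cnt_ext n (fun i => remove U (Fin.FS p) (Fin.FS i)) (remove (fun i => U (Fin.FS i)) p)).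
    + rewrite <- (IHn (fun i => U (Fin.FS i)) p Hl). destruct (U Fin.F1); simpl; lia.
    + intros i. unfold remove. destruct (Fin.eq_dec (Fin.FS i) (Fin.FS p)), (Fin.eq_dec i p); auto.
      * apply Fin.FS_inj in e; congruence.
      * subst; congruence.
Qed.

Lemma remove_spec n (U : Fin.t n -> bool) l j : remove U l j = true <-> U j = true /\ j <> l.
Proof. unfold remove. destruct (Fin.eq_dec j l); split; intuition congruence. Qed.
Lemma remove_false n (U : Fin.t n -> bool) l j : (U j = false \/ j = l) -> remove U l j = false.
Proof. intros [E|E]; unfold remove; destruct (Fin.eq_dec j l); congruence. Qed.

Section Main.
Variables (D m : nat) (H : HilbertSpace) (a : RD D -> H) (ts : Fin.t m -> RD D).
Hypothesis Hk : admissible_kernel H a.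
Hypothesis Hdist : forall l l', ts l = ts l' -> l = l'.
Hypothesis HS : admissible_support (kappa H a) ts.

Notation A l := (a (ts l)).
Definition V (c : Fin.t m -> R) : H := Vc H a ts c.

Definition Pb (U : Fin.t m -> bool) (l : Fin.t m) (b : Fin.t m -> R) : Prop :=
  (forall j, (U j = false \/ j = l) -> b j = 0) /\ (forall j, 0 <= b j) /\ rsum m b < 1 /\
  (forall j, U j = true -> j <> l -> inner H (hsub H (A l) (V b)) (A j) = 0).

Definition AdmB U (B : Fin.t m -> Fin.t m -> R) := forall l, U l = true -> Pb U l (B l).

Definition rr (B : Fin.t m -> Fin.t m -> R) l := hsub H (A l) (V (B l)).
Definition nr B l := inner H (rr B l) (A l).

Lemma inner_V_l' c z : inner H (V c) z = rsum m (fun l => c l * inner H (A l) z).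
Proof. apply inner_V_l. Qed.
Lemma inner_V_r' c z : inner H z (V c) = rsum m (fun l => c l * inner H z (A l)).
Proof. apply inner_V_r. Qed.

Lemma nr_pos U B l : AdmB U B -> U l = true -> 0 < nr B l.
Proof.
  intros Ad Hl. destruct (Ad l Hl) as [Hs [Hp [Hsum Ho]]].
  unfold nr, rr. rewrite inner_sub_l, inner_V_l'.
  destruct Hk as [K1 _]. unfold kappa in K1. rewrite K1.
  assert (rsum m (fun j => B l j * inner H (A j) (A l)) <= rsum m (B l)).
  { apply rsum_le. intros j. pose proof (k_bounds H a Hk (ts j) (ts l)). unfold kappa in H0.
    specialize (Hp j). nra. }
  lra.
Qed.

Lemma rA U B l j : AdmB U B -> U l = true -> U j = true -> inner H (rr B l) (A j) = delta l j * nr B l.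
Proof.
  intros Ad Hl Hj. destruct (Fin.eq_dec l j) as [E|E].
  - subst. rewrite delta_refl. unfold nr; ring.
  - rewrite delta_neq by auto. destruct (Ad l Hl) as [_ [_ [_ Ho]]]. unfold rr. rewrite Ho; auto. ring.
Qed.

Lemma coef U B c l : AdmB U B -> (forall j, U j = false -> c j = 0) -> U l = true ->
  inner H (V c) (rr B l) = c l * nr B l.
Proof.
  intros Ad Hc Hl. rewrite inner_V_l'.
  rewrite (rsum_ext _ _ (fun j => delta l j * (c j * nr B l))).
  - apply rsum_delta.
  - intros j. destruct (U j) eqn:Uj.
    + rewrite inner_sym, (rA U B l j Ad Hl Uj). ring.
    + rewrite (Hc j Uj). ring.
Qed.

Lemma orth U B l h : AdmB U B -> U l = true -> (forall j, U j = true -> inner H h (A j) = 0) ->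
  inner H h (rr B l) = 0.
Proof.
  intros Ad Hl Hh. destruct (Ad l Hl) as [Hs _]. unfold rr. rewrite inner_sub_r, inner_V_r', (Hh l Hl).
  rewrite (rsum_ext _ _ (fun _ => 0)); [rewrite rsum_zero; ring|].
  intros j. destruct (U j) eqn:Uj.
  - rewrite (Hh j Uj); ring.
  - rewrite (Hs j (or_introl Uj)); ring.
Qed.

Definition cD (U : Fin.t m -> bool) (B : Fin.t m -> Fin.t m -> R) (w : Fin.t m -> R) : Fin.t m -> R :=
  fun l => rsum m (fun i => if U i then w i * (delta i l - B i l) else 0).

Lemma sum_r (B : Fin.t m -> Fin.t m -> R) (i : Fin.t m) (z : H) : rsum m (fun k => inner H z (A k) * (delta i k - B i k)) = inner H z (rr B i).
Proof.
  unfold rr. rewrite inner_sub_r, inner_V_r'.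
  rewrite (rsum_ext _ _ (fun k => delta i k * inner H z (A k) - B i k * inner H z (A k))) by (intros; ring).
  rewrite rsum_minus, rsum_delta. reflexivity.
Qed.

Lemma D1 U B w j : AdmB U B -> U j = true -> inner H (V (cD U B w)) (A j) = w j * nr B j.
Proof.
  intros Ad Hj. rewrite inner_V_l'. unfold cD.
  rewrite (rsum_ext _ _ (fun l => rsum m (fun i => (if U i then w i * (delta i l - B i l) else 0) * inner H (A l) (A j))))
    by (intros; rewrite rsum_scal_r; reflexivity).
  rewrite rsum_exchange.
  rewrite (rsum_ext _ _ (fun i => delta j i * (w j * nr B j))).
  - apply rsum_delta.
  - intros i. destruct (U i) eqn:Ui.
    + rewrite (rsum_ext _ _ (fun l => w i * (inner H (A j) (A l) * (delta i l - B i l)))) by (intros; rewrite inner_sym; ring).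
      rewrite rsum_scal, sum_r, inner_sym, (rA U B i j Ad Ui Hj).
      destruct (Fin.eq_dec i j) as [E|E].
      * subst. rewrite delta_refl. ring.
      * rewrite delta_neq, (delta_neq _ j i) by auto. ring.
    + rewrite (rsum_ext _ _ (fun _ => 0)) by (intros; ring). rewrite rsum_zero.
      rewrite delta_neq; [ring|]. intros E; subst; congruence.
Qed.

Lemma D2 U B w j : AdmB U B -> U j = false -> cD U B w j = 0.
Proof.
  intros Ad Hj. unfold cD. rewrite (rsum_ext _ _ (fun _ => 0)); [apply rsum_zero|].
  intros i. destruct (U i) eqn:Ui; [|reflexivity].
  destruct (Ad i Ui) as [Hs _]. rewrite (Hs j (or_introl Hj)).
  rewrite delta_neq; [ring|]. intros E; subst; congruence.
Qed.


Lemma psi_eq (T : Fin.t m -> bool) (c : Fin.t m -> R) t :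
  (forall j, T j = false -> c j = 0) ->
  psi (kappa H a) ts T c t = inner H (a t) (V c).
Proof.
  intros Hc. unfold psi. rewrite inner_V_r'. apply rsum_ext. intros j.
  destruct (T j) eqn:Tj; unfold kappa; [reflexivity|]. rewrite (Hc j Tj); ring.
Qed.

Lemma nonneg U B l y : AdmB U B -> U l = true -> 0 <= inner H (a y) (rr B l).
Proof.
  intros Ad Hl. pose proof (Ad l Hl) as [Hs [Hp [Hsum Ho]]].
  set (b := B l) in *.
  set (T := fun j => if Rlt_dec 0 (b j) then true else false).
  assert (HT : forall j, T j = false -> b j = 0).
  { intros j. unfold T. destruct (Rlt_dec 0 (b j)); [discriminate|]. intros _. specialize (Hp j). lra. }
  assert (HT2 : forall j, T j = true -> 0 < b j).
  { intros j. unfold T. destruct (Rlt_dec 0 (b j)); [auto|discriminate]. }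
  unfold rr. fold b. rewrite inner_sub_r.
  destruct (classic (exists j, T j = true)) as [Hex|Hnex].
  - assert (Hs2 : rsum m (fun j => if T j then b j else 0) < 1).
    { rewrite (rsum_ext _ _ b); auto. intros j. destruct (T j) eqn:Tj; auto. rewrite HT; auto. }
    destruct (HS T b Hex HT2 Hs2) as [_ Hii].
    assert (Tl : T l = false).
    { destruct (T l) eqn:Tl; auto. specialize (HT2 l Tl). rewrite (Hs l (or_intror eq_refl)) in HT2. lra. }
    assert (Hchk : forall l', T l' = true -> psi (kappa H a) ts T b (ts l') - kappa H a (ts l') (ts l) <= 0).
    { intros l' Tl'. rewrite psi_eq by auto. unfold kappa.
      assert (Ul' : U l' = true).
      { destruct (U l') eqn:E; auto. specialize (HT2 l' Tl'). rewrite (Hs l' (or_introl E)) in HT2. lra. }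
      assert (Nl : l' <> l).
      { intros E; subst. congruence. }
      specialize (Ho l' Ul' Nl). rewrite inner_sub_l in Ho.
      rewrite (inner_sym H (A l') (V b)), (inner_sym H (A l') (A l)). lra. }
    specialize (Hii l Tl Hchk y). rewrite psi_eq in Hii by auto. unfold kappa in Hii. lra.
  - assert (Hb0 : forall j, b j = 0).
    { intros j. apply HT. destruct (T j) eqn:Tj; auto. exfalso; apply Hnex; exists j; auto. }
    rewrite inner_V_r'. rewrite (rsum_ext _ _ (fun _ => 0)) by (intros j; rewrite Hb0; ring).
    rewrite rsum_zero. pose proof (k_bounds H a Hk y (ts l)). unfold kappa in H0. lra.
Qed.

Lemma good U B x c : AdmB U B -> (forall l, U l = true -> x <> ts l) ->
  (forall j, U j = false -> c j = 0) ->
  (forall j, U j = true -> inner H (V c) (A j) = inner H (a x) (A j)) ->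
  (forall l, 0 <= c l) /\ rsum m c < 1.
Proof.
  intros Ad Hx Hc Ho.
  assert (G1 : forall l, 0 <= c l).
  { intros l. destruct (U l) eqn:Ul; [|rewrite Hc; auto; lra].
    assert (E : inner H (V c) (rr B l) = inner H (a x) (rr B l)).
    { pose proof (orth U B l (hsub H (V c) (a x)) Ad Ul) as O.
      rewrite inner_sub_l in O. apply Rminus_diag_uniq. apply O.
      intros j Uj. rewrite inner_sub_l, Ho; auto; ring. }
    rewrite (coef U B c l Ad Hc Ul) in E.
    pose proof (nonneg U B l x Ad Ul). pose proof (nr_pos U B l Ad Ul). nra. }
  split; auto.
  set (al := cD U B (fun i => / nr B i)).
  assert (Ha1 : forall j, U j = true -> inner H (V al) (A j) = 1).
  { intros j Uj. unfold al. rewrite D1 by auto. pose proof (nr_pos U B j Ad Uj). field; lra. }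
  assert (Ha0 : forall j, U j = false -> al j = 0) by (intros; apply D2; auto).
  assert (Hap : forall l, U l = true -> 0 < al l).
  { intros l Ul. pose proof (coef U B al l Ad Ha0 Ul) as C.
    unfold rr in C. rewrite inner_sub_r, Ha1, inner_V_r' in C by auto.
    destruct (Ad l Ul) as [Hs [_ [Hsum _]]].
    rewrite (rsum_ext _ _ (B l)) in C.
    - pose proof (nr_pos U B l Ad Ul). nra.
    - intros j. destruct (U j) eqn:Uj; [rewrite Ha1; auto; ring|]. rewrite (Hs j (or_introl Uj)); ring. }
  assert (Hage : forall l, 0 <= al l).
  { intros l. destruct (U l) eqn:Ul; [left; auto|rewrite Ha0; auto; lra]. }
  assert (Hsc : rsum m c = inner H (V al) (a x)).
  { transitivity (inner H (V c) (V al)).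
    - rewrite inner_V_l'. apply rsum_ext. intros j. destruct (U j) eqn:Uj.
      + rewrite inner_sym, Ha1; auto; ring.
      + rewrite Hc; auto; ring.
    - rewrite inner_sym, !inner_V_l'. apply rsum_ext. intros j. destruct (U j) eqn:Uj.
      + rewrite inner_sym, Ho, inner_sym; auto.
      + rewrite Ha0; auto; ring. }
  rewrite Hsc.
  destruct (classic (exists l0, U l0 = true)) as [[l0 Ul0]|Hn].
  2:{ rewrite inner_V_l', (rsum_ext _ _ (fun _ => 0)); [rewrite rsum_zero; lra|].
      intros j. rewrite Ha0; [ring|]. destruct (U j) eqn:Uj; auto. exfalso; apply Hn; exists j; auto. }
  set (Sa := rsum m al).
  assert (HSa : 0 <= Sa) by (apply rsum_nonneg; auto).
  set (s := / (Sa + 1)).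
  assert (Hs0 : 0 < s) by (unfold s; apply Rinv_0_lt_compat; lra).
  set (cc := fun j => s * al j).
  assert (Hcc0 : forall j, U j = false -> cc j = 0) by (intros j Uj; unfold cc; rewrite Ha0; auto; ring).
  assert (Hpsi : forall t, psi (kappa H a) ts U cc t = s * inner H (V al) (a t)).
  { intros t. rewrite psi_eq by auto. rewrite inner_sym, !inner_V_l'. unfold cc. rewrite <- rsum_scal.
    apply rsum_ext; intros; ring. }
  assert (Hf : forall t, rsum m (fun j => cc j * kappa H a t (ts j)) = s * inner H (V al) (a t)).
  { intros t. rewrite <- Hpsi. unfold psi. apply rsum_ext. intros j. destruct (U j) eqn:Uj; auto.
    rewrite Hcc0; auto; ring. }
  assert (Hsum1 : rsum m (fun j => if U j then cc j else 0) < 1).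
  { rewrite (rsum_ext _ _ cc) by (intros j; destruct (U j) eqn:Uj; auto; rewrite Hcc0; auto).
    unfold cc. rewrite rsum_scal. fold Sa. unfold s.
    replace (/ (Sa + 1) * Sa) with (1 - / (Sa + 1)) by (field; lra).
    pose proof (Rinv_0_lt_compat (Sa + 1) ltac:(lra)). lra. }
  assert (Hccp : forall l, U l = true -> 0 < cc l) by (intros l Ul; unfold cc; apply Rmult_lt_0_compat; auto).
  destruct (HS U cc (ex_intro _ l0 Ul0) Hccp Hsum1) as [Hi _].
  destruct (max_ker H a ts cc (ts l0) Hk) as [y Hy].
  { rewrite Hf, Ha1 by auto. lra. }
  destruct (Hi y) as [l1 [Ul1 Ey]].
  { intros t'. rewrite !Hpsi, <- !Hf. apply Hy. }
  assert (Hmax : forall t, s * inner H (V al) (a t) <= s).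
  { intros t. rewrite <- Hf. eapply Rle_trans; [apply Hy|]. rewrite Hf, Ey, Ha1 by auto. lra. }
  apply Rnot_le_lt. intros Hge.
  destruct (Hi x) as [l2 [Ul2 Ex]].
  { intros t'. rewrite !Hpsi. pose proof (Hmax t'). nra. }
  exact (Hx l2 Ul2 Ex).
Qed.

Lemma adm_all : forall n U, (cnt m U <= n)%nat -> exists B, AdmB U B.
Proof.
  induction n; intros U HU.
  - exists (fun _ _ => 0). intros l Hl. pose proof (cnt_remove m U l Hl). lia.
  - assert (Hl : forall l, exists b, U l = true -> Pb U l b).
    { intros l. destruct (U l) eqn:Ul; [|exists (fun _ => 0); discriminate].
      set (U' := remove U l).
      assert (HU' : (cnt m U' <= n)%nat) by (pose proof (cnt_remove m U l Ul); unfold U'; lia).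
      destruct (IHn U' HU') as [B' Ad'].
      set (c := cD U' B' (fun i => inner H (A l) (A i) / nr B' i)).
      assert (Hc0 : forall j, U' j = false -> c j = 0) by (intros; apply D2; auto).
      assert (Ho : forall j, U' j = true -> inner H (V c) (A j) = inner H (a (ts l)) (A j)).
      { intros j Uj. unfold c. rewrite D1 by auto. pose proof (nr_pos U' B' j Ad' Uj). field; lra. }
      assert (Hx : forall j, U' j = true -> ts l <> ts j).
      { intros j Uj E. apply remove_spec in Uj. destruct Uj as [_ Nj]. apply Nj. symmetry. apply Hdist; auto. }
      destruct (good U' B' (ts l) c Ad' Hx Hc0 Ho) as [Hpos Hsum].
      exists c. intros _. split; [|split; [|split]]; auto.
      - intros j Hj. apply Hc0. apply remove_false; auto.
      - intros j Uj Nj. rewrite inner_sub_l, Ho; [ring|]. apply remove_spec; auto. }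
    apply choice_fun in Hl. destruct Hl as [B HB]. exists B. intros l Ul. apply HB; auto.
Qed.

Lemma main_sec : lin_indep H (fun l => a (ts l)) /\
  (let G := fun l l' => kappa H a (ts l) (ts l') in
   (exists Gi, is_inverse G Gi) /\
   forall Gi, is_inverse G Gi ->
   forall t : RD D, (forall l, t <> ts l) ->
     l1norm (matvec Gi (fun l => kappa H a t (ts l))) < 1).
Proof.
  set (Uall := fun _ : Fin.t m => true).
  destruct (adm_all (cnt m Uall) Uall (le_n _)) as [B Ad].
  assert (Hsup : forall c j, Uall j = false -> (c : Fin.t m -> R) j = 0) by (intros c j E; discriminate).
  assert (nrp : forall l, 0 < nr B l) by (intros l; apply (nr_pos Uall); auto).
  assert (VR : forall i z, inner H (V (fun k => delta i k - B i k)) z = inner H (rr B i) z).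
  { intros i z. rewrite inner_V_l', inner_sym, <- sum_r. apply rsum_ext. intros k. rewrite inner_sym. ring. }
  assert (Gsym : forall i k, (delta k i - B k i) / nr B k = (delta i k - B i k) / nr B i).
  { intros i k.
    pose proof (coef Uall B (fun k => delta i k - B i k) k Ad (Hsup _) eq_refl) as C1.
    pose proof (coef Uall B (fun i => delta k i - B k i) i Ad (Hsup _) eq_refl) as C2.
    rewrite VR in C1, C2. rewrite inner_sym in C2. cbv beta in C1, C2.
    pose proof (nrp i). pose proof (nrp k).
    apply (Rmult_eq_reg_r (nr B i * nr B k)); [|nra].
    field_simplify; try lra. }
  split.
  { intros c Hc l. change (V c = hzero H) in Hc.
    pose proof (coef Uall B c l Ad (Hsup _) eq_refl) as C.
    rewrite Hc, inner_zero_l in C. pose proof (nrp l). nra. }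
  cbv zeta. split.
  - exists (fun i j => (delta j i - B j i) / nr B j). split.
    + intros i j. rewrite (rsum_ext _ _ (fun k => / nr B i * (inner H (A j) (A k) * (delta i k - B i k)))).
      * rewrite rsum_scal, sum_r, inner_sym, (rA Uall B i j Ad eq_refl eq_refl).
        pose proof (nrp i). field. lra.
      * intros k. rewrite Gsym. unfold kappa. rewrite (inner_sym H (A k)). pose proof (nrp i). field. lra.
    + intros i j. rewrite (rsum_ext _ _ (fun k => / nr B j * (inner H (A i) (A k) * (delta j k - B j k)))).
      * rewrite rsum_scal, sum_r, inner_sym, (rA Uall B j i Ad eq_refl eq_refl), delta_sym.
        pose proof (nrp j). field. lra.
      * intros k. unfold kappa. pose proof (nrp j). field. lra.
  - intros Gi [HGi1 HGi2] t Ht.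
    set (w := matvec Gi (fun l => kappa H a t (ts l))).
    assert (Ho : forall j, Uall j = true -> inner H (V w) (A j) = inner H (a t) (A j)).
    { intros j _. rewrite inner_V_l'. unfold w, matvec.
      rewrite (rsum_ext _ _ (fun l => rsum m (fun i => Gi l i * kappa H a t (ts i) * inner H (A l) (A j))))
        by (intros; rewrite rsum_scal_r; reflexivity).
      rewrite rsum_exchange.
      rewrite (rsum_ext _ _ (fun i => delta j i * kappa H a t (ts i))).
      - rewrite rsum_delta. reflexivity.
      - intros i. rewrite <- (HGi2 j i), <- rsum_scal_r. apply rsum_ext. intros l. unfold kappa.
        rewrite (inner_sym H (A l)). ring. }
    destruct (good Uall B t w Ad (fun l _ => Ht l) (Hsup _) Ho) as [Hp Hs].
    unfold l1norm. rewrite (rsum_ext _ _ w); auto. intros i. apply Rabs_pos_eq. apply Hp.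
Qed.

End Main.


Theorem mainTheorem3 (D m : nat) (H : HilbertSpace) (a : RD D -> H)
  (ts : Fin.t m -> RD D)
  (Hk : admissible_kernel H a)
  (Hdist : forall l l', ts l = ts l' -> l = l')
  (HS : admissible_support (kappa H a) ts) :
  lin_indep H (fun l => a (ts l)) /\
  (let G := fun l l' => kappa H a (ts l) (ts l') in
   (exists Gi, is_inverse G Gi) /\
   forall Gi, is_inverse G Gi ->
   forall t : RD D, (forall l, t <> ts l) ->
     l1norm (matvec Gi (fun l => kappa H a t (ts l))) < 1).
Proof. exact (main_sec D m H a ts Hk Hdist HS). Qed.
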